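(* Let $d \geq 2$. Then: (1) for all integers $s_1, \ldots, s_k \geq 1$, $$\frac{s_1}{s_1+\ldots+s_k}\mathsf U_{d,s_1}+\ldots+\frac{s_k}{s_1+\ldots+s_k}\mathsf U_{d,s_k}\subseteq \mathsf U_{d,s_1+\ldots+s_k};$$ (2) for all integers $s, n \geq 1$, $\mathsf U_{d,s} \subseteq \mathsf U_{d,ns}$; (3) for all integers $s,t \geq 1$, $\mathsf U_{d,s}\cap \mathsf U_{d,t} \subseteq \mathsf U_{d,s+t}$.
   Context: For integers $d\ge 2$, $s\ge 1$, a matrix $U\in\mathcal U(ds)$ (unitary $ds\times ds$ complex matrices) is viewed as a $d\times d$ block matrix with blocks $U_{ij}\in M_s(\mathbb C)$. Define $\phi_{d,s}(U)=\big(\tfrac1s\|U_{ij}\|_F^2\big)_{i,j=1}^d$, where $\|X\|_F=\operatorname{Tr}(XX^* )^{1/2}$, and $\mathsf U_{d,s}:=\phi_{d,s}(\mathcal U(ds))$. Sums of sets are Minkowski sums. *)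

(* Defs.v *)
From HB Require Import structures.
From mathcomp Require Import all_boot all_order all_algebra.
From mathcomp Require Import complex.
From mathcomp Require Import reals.
Set Implicit Arguments. Unset Strict Implicit. Unset Printing Implicit Defensive.
Import Order.TTheory GRing.Theory Num.Theory.
Local Open Scope ring_scope.

Definition adjmx (R : realType) m n (A : 'M[R[i]]_(m, n)) : 'M[R[i]]_(n, m) :=
  (map_mx (@conjc R) A)^T.

Definition unitary_mx (R : realType) (N : nat) (U : 'M[R[i]]_N) : Prop :=
  U *m adjmx U = 1%:M.

Lemma blk_idx_proof (d s : nat) (i : 'I_d) (a : 'I_s) : (i * s + a < d * s)%N.
Proof.
case: i a => i Hi [a Ha] /=.
have H1 : (i * s + a < i * s + s)%N by rewrite ltn_add2l.
apply: (leq_trans H1); rewrite -mulSnr leq_mul2r; by rewrite Hi orbT.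
Qed.

(* row/column index of entry (a,b) of block (i,j): (i*s + a, j*s + b) *)
Definition blk_idx (d s : nat) (i : 'I_d) (a : 'I_s) : 'I_(d * s) :=
  Ordinal (blk_idx_proof i a).

Definition block_of (R : realType) (d s : nat) (U : 'M[R[i]]_(d * s))
  (i j : 'I_d) : 'M[R[i]]_s :=
  \matrix_(a < s, b < s) U (blk_idx i a) (blk_idx j b).

Definition frob2 (R : realType) n m (X : 'M[R[i]]_(n, m)) : R :=
  \sum_(a < n) \sum_(b < m) (Normc.normc (X a b)) ^+ 2.

Definition phi (R : realType) (d s : nat) (U : 'M[R[i]]_(d * s)) : 'M[R]_d :=
  \matrix_(i < d, j < d) (s%:R^-1 * frob2 (block_of U i j)).

Definition Uset (R : realType) (d s : nat) (M : 'M[R]_d) : Prop :=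
  exists U : 'M[R[i]]_(d * s), unitary_mx U /\ phi U = M.

(* Main.v *)
Require Import Defs.
From HB Require Import structures.
From mathcomp Require Import all_boot all_order all_algebra.
From mathcomp Require Import complex.
From mathcomp Require Import reals.
Import Order.TTheory GRing.Theory Num.Theory.
Local Open Scope ring_scope.
Set Implicit Arguments. Unset Strict Implicit. Unset Printing Implicit Defensive.

Lemma dec1 d n (x : 'I_(d*n)) : (x %/ n < d)%N.
Proof.
case: n x => [|n] x; first by move: (ltn_ord x); rewrite {2}muln0.
by rewrite ltn_divLR // mulnC ltn_ord.
Qed.

Lemma dec2 d n (x : 'I_(d*n)) : (x %% n < n)%N.
Proof.
case: n x => [|n] x; first by move: (ltn_ord x); rewrite {2}muln0.
by rewrite ltn_pmod.
Qed.

Definition dec d n (x : 'I_(d*n)) : 'I_d * 'I_n :=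
  (Ordinal (dec1 x), Ordinal (dec2 x)).

Lemma blkK d n (i : 'I_d) (a : 'I_n) : dec (blk_idx i a) = (i, a).
Proof.
have n0 : (0 < n)%N by apply: leq_ltn_trans (leq0n a) (ltn_ord a).
rewrite /dec; congr pair; apply: val_inj => /=.
  by rewrite divnMDl // divn_small // addn0.
by rewrite modnMDl modn_small.
Qed.

Lemma decK d n (x : 'I_(d*n)) : blk_idx (dec x).1 (dec x).2 = x.
Proof. by apply: val_inj => /=; rewrite -divn_eq. Qed.

Lemma splitl m n (u : 'I_m) : split (lshift n u) = inl u.
Proof. exact: (unsplitK (inl u)). Qed.
Lemma splitr m n (u : 'I_n) : split (rshift m u) = inr u.
Proof. exact: (unsplitK (inr u)). Qed.

Definition emap d a b (x : 'I_(d*(a+b))) : 'I_(d*a + d*b) :=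
  match split (dec x).2 with
  | inl u => lshift (d*b) (blk_idx (dec x).1 u)
  | inr v => rshift (d*a) (blk_idx (dec x).1 v) end.

Definition emap' d a b (w : 'I_(d*a + d*b)) : 'I_(d*(a+b)) :=
  match split w with
  | inl u => blk_idx (dec u).1 (lshift b (dec u).2)
  | inr v => blk_idx (dec v).1 (rshift a (dec v).2) end.

Lemma emapEl d a b (i : 'I_d) (u : 'I_a) :
  emap (blk_idx i (lshift b u)) = lshift (d*b) (blk_idx i u).
Proof. by rewrite /emap blkK /= splitl. Qed.

Lemma emapEr d a b (i : 'I_d) (u : 'I_b) :
  emap (blk_idx i (rshift a u)) = rshift (d*a) (blk_idx i u).
Proof. by rewrite /emap blkK /= splitr. Qed.

Lemma emapK d a b : cancel (@emap d a b) (@emap' d a b).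
Proof.
suff H : forall (i : 'I_d) (x : 'I_(a+b)), emap' (emap (blk_idx i x)) = blk_idx i x.
  by move=> x; rewrite -(decK x) H.
move=> i x; rewrite -(splitK x); case: (split x) => u /=.
  by rewrite emapEl /emap' splitl blkK.
by rewrite emapEr /emap' splitr blkK.
Qed.

Lemma emap'K d a b : cancel (@emap' d a b) (@emap d a b).
Proof.
move=> w; rewrite -(splitK w); case: (split w) => u /=.
  by rewrite /emap' splitl emapEl decK.
by rewrite /emap' splitr emapEr decK.
Qed.

Lemma unitary_reindex (R : realType) n m (D : 'M[R[i]]_m) (e : 'I_n -> 'I_m) e' :
  cancel e e' -> cancel e' e -> unitary_mx D ->
  unitary_mx (\matrix_(x < n, y < n) D (e x) (e y)).
Proof.
move=> K K' UD; apply/matrixP => x y.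
transitivity ((D *m adjmx D) (e x) (e y)); last first.
  by rewrite UD !mxE (inj_eq (can_inj K)).
rewrite !mxE (reindex e'); last by apply: onW_bij; exists e.
by apply: eq_bigr => w _; rewrite /adjmx !mxE K'.
Qed.

Lemma adj0 (R : realType) m n : adjmx (0 : 'M[R[i]]_(m, n)) = 0.
Proof. by apply/matrixP => x y; rewrite !mxE conjc0. Qed.

Lemma unitary_block (R : realType) a b (U : 'M[R[i]]_a) (V : 'M[R[i]]_b) :
  unitary_mx U -> unitary_mx V -> unitary_mx (block_mx U 0 0 V).
Proof.
rewrite /unitary_mx => HU HV.
have -> : adjmx (block_mx U 0 0 V) = block_mx (adjmx U) 0 0 (adjmx V).
  by rewrite /adjmx map_block_mx tr_block_mx -!/(adjmx _) !adj0.
rewrite mulmx_block !mulmx0 !mul0mx !addr0 !add0r HU HV.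
by rewrite -scalar_mx_block.
Qed.

Definition Fm (R : realType) d n (U : 'M[R[i]]_(d * n)) : 'M[R]_d :=
  \matrix_(i < d, j < d) frob2 (block_of U i j).

Lemma blkW (R : realType) d a b (M : 'M[R[i]]_(d*a + d*b)) i j x y :
  block_of (\matrix_(x, y) M (@emap d a b x) (emap y)) i j x y =
  M (emap (blk_idx i x)) (emap (blk_idx j y)).
Proof. by rewrite !mxE. Qed.

Lemma binary (R : realType) d a b (U : 'M[R[i]]_(d*a)) (V : 'M[R[i]]_(d*b)) :
  unitary_mx U -> unitary_mx V ->
  exists W : 'M[R[i]]_(d*(a+b)), unitary_mx W /\ Fm W = Fm U + Fm V.
Proof.
move=> HU HV.
exists (\matrix_(x, y) (block_mx U 0 0 V) (@emap d a b x) (emap y)); split.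
  exact: (unitary_reindex (@emapK d a b) (@emap'K d a b) (unitary_block HU HV)).
apply/matrixP => i j; rewrite !mxE /frob2.
rewrite big_split_ord /=.
congr (_ + _); apply: eq_bigr => x _; rewrite big_split_ord /=.
  rewrite [X in _ + X]big1 ?addr0; last first.
    by move=> y _; rewrite blkW emapEl emapEr block_mxEur mxE Normc.normc0 expr0n.
  by apply: eq_bigr => y _; rewrite blkW !emapEl block_mxEul mxE.
rewrite big1 ?add0r; last first.
  by move=> y _; rewrite blkW emapEr emapEl block_mxEdl mxE Normc.normc0 expr0n.
by apply: eq_bigr => y _; rewrite blkW !emapEr block_mxEdr mxE.
Qed.

Lemma sum_lemma (R : realType) d k (s : 'I_k -> nat) (G : 'I_k -> 'M[R]_d) :
  (forall l, exists U : 'M[R[i]]_(d * s l), unitary_mx U /\ Fm U = G l) ->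
  forall N, N = (\sum_(l < k) s l)%N ->
  exists W : 'M[R[i]]_(d * N), unitary_mx W /\ Fm W = \sum_(l < k) G l.
Proof.
elim: k s G => [|k IH] s G H N HN.
  rewrite big_ord0 in HN; subst N; exists 0; split.
    apply/matrixP => x; exfalso.
    by move: (ltn_ord x) => /leq_trans/(_ (eq_leq (muln0 d))).
  by apply/matrixP => i j; rewrite big_ord0 !mxE /frob2 big_ord0.
have [U [HU FU]] := H ord_max.
have [W0 [HW0 FW0]] := IH (fun l => s (widen_ord (leqnSn k) l))
   (fun l => G (widen_ord (leqnSn k) l)) (fun l => H _) _ erefl.
have [W [HW FW]] := binary HW0 HU.
rewrite big_ord_recr /= in HN; subst N.
by exists W; split => //; rewrite FW FW0 FU big_ord_recr.
Qed.

Theorem corollary2p7 (R : realType) (d : nat) (hd : (2 <= d)%N) :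
  (* (1) weighted Minkowski sums *)
  (forall (k : nat) (s : 'I_k -> nat), (0 < k)%N -> (forall l, 0 < s l)%N ->
     forall M : 'I_k -> 'M[R]_d, (forall l, @Uset R d (s l) (M l)) ->
     @Uset R d (\sum_(l < k) s l)%N
       (\sum_(l < k) (((s l)%:R / (\sum_(l' < k) s l')%N%:R) *: M l)))
  /\
  (* (2) U_{d,s} is contained in U_{d,ns} *)
  (forall (s n : nat), (0 < s)%N -> (0 < n)%N ->
     forall M : 'M[R]_d, @Uset R d s M -> @Uset R d (n * s) M)
  /\
  (* (3) U_{d,s} intersected with U_{d,t} is contained in U_{d,s+t} *)
  (forall (s t : nat), (0 < s)%N -> (0 < t)%N ->
     forall M : 'M[R]_d, @Uset R d s M -> @Uset R d t M -> @Uset R d (s + t) M).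
Proof.
have P1 : forall (k : nat) (s : 'I_k -> nat), (0 < k)%N -> (forall l, 0 < s l)%N ->
     forall M : 'I_k -> 'M[R]_d, (forall l, @Uset R d (s l) (M l)) ->
     @Uset R d (\sum_(l < k) s l)%N
       (\sum_(l < k) (((s l)%:R / (\sum_(l' < k) s l')%N%:R) *: M l)).
  move=> k s k0 spos M HM.
  have [|W [HW FW]] := @sum_lemma R d k s (fun l => (s l)%:R *: M l) _ _ erefl.
    move=> l; have [U [HU PU]] := HM l; exists U; split => //.
    rewrite -PU; apply/matrixP => i j; rewrite !mxE mulrA mulfV ?mul1r //.
    by rewrite pnatr_eq0 -lt0n spos.
  exists W; split => //; apply/matrixP => i j; rewrite mxE.
  have -> : frob2 (block_of W i j) = Fm W i j by rewrite mxE.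
  rewrite FW.
  rewrite !summxE mulr_sumr; apply: eq_bigr => l _; rewrite !mxE.
  by rewrite mulrCA mulrA.
split; first exact: P1.
split.
  move=> s n s0 n0 M HM.
  have := P1 n (fun _ => s) n0 (fun _ => s0) (fun _ => M) (fun _ => HM).
  rewrite big_const_ord iter_addn_0 sumr_const card_ord -scaler_nat scalerA.
  rewrite mulnC mulrA -natrM mulfV ?scale1r //.
  by rewrite pnatr_eq0 muln_eq0 negb_or -!lt0n n0 s0.
move=> s t s0 t0 M HMs HMt.
have spos : forall l : 'I_2, (0 < (if val l == 0%N then s else t))%N.
  by case => -[|l] ? //=.
have HM : forall l : 'I_2, Uset (if val l == 0%N then s else t) M.
  by case => -[|l] ? /=.
have := P1 2 _ erefl spos (fun _ => M) HM.
rewrite !big_ord_recr !big_ord0 /= add0n add0r -scalerDl -mulrDl -natrD.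
by rewrite mulfV ?scale1r // pnatr_eq0 -lt0n addn_gt0 s0.
Qed.
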